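(* Let $M,N\ge0$ be integers and $a,b,c,d,q$ generic complex parameters. For all $\alpha,\beta\in\{0,1\}$, all $0\le k\le M$, $0\le j\le N$ and $0\le l\le M+N$, $$R_{k+j}^l(a,b,c,d;M+N;q)=\sum_{\substack{m+n=l\\0\le m\le M,\ 0\le n\le N}}R_k^m\big(aq^{\alpha j},bq^{\beta(N-j)},c,d;M;q\big)\,R_j^n\big(aq^{(1-\alpha)k},bq^{(1-\beta)(M-k)},cq^m,dq^{M-m};N;q\big).$$
   Context: $h_k(x;a)=\prod_{j=0}^{k-1}(1-axq^j+a^2q^{2j})$. For generic parameters, $R_k^l(a,b,c,d;N;q)$ ($0\le k,l\le N$) are the unique coefficients with $h_k(x;a)h_{N-k}(x;b)=\sum_{l=0}^N R_k^l(a,b,c,d;N;q)h_l(x;c)h_{N-l}(x;d)$ as polynomials in $x$. *)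

(* Defs.v *)
From HB Require Import structures.
From mathcomp Require Import all_boot all_order all_algebra.
From Stdlib Require Import ClassicalEpsilon.
Set Implicit Arguments. Unset Strict Implicit. Unset Printing Implicit Defensive.
Import Order.TTheory GRing.Theory.
Local Open Scope ring_scope.

Section Defs.
Variable F : fieldType.

Definition hpol (q : F) (k : nat) (a : F) : {poly F} :=
  \prod_(i < k) ((1 + a ^+ 2 * q ^+ (2 * i))%:P - (a * q ^+ i) *: 'X).

(* the family h_l(x;c) h_{N-l}(x;d), 0 <= l <= N, is linearly independent
   (this is exactly the condition making the coefficients R unique) *)
Definition hfree (q c d : F) (N : nat) : Prop :=
  forall r : nat -> F,
    \sum_(l < N.+1) r l *: (hpol q l c * hpol q (N - l) d) = 0 ->
    forall l, (l <= N)%N -> r l = 0.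

Definition Rexp (q a b c d : F) (N k : nat) (r : nat -> F) : Prop :=
  hpol q k a * hpol q (N - k) b
  = \sum_(l < N.+1) r l *: (hpol q l c * hpol q (N - l) d).

(* R_k^l(a,b,c,d;N;q): a chosen family of coefficients satisfying Rexp
   (unique on 0 <= l <= N whenever hfree q c d N holds). *)
Definition Rcoef (q a b c d : F) (N k l : nat) : F :=
  epsilon (inhabits (fun _ : nat => (0 : F))) (Rexp q a b c d N k) l.

End Defs.

(* Main.v *)
Require Import Defs.
From HB Require Import structures.
From mathcomp Require Import all_boot all_order all_algebra.
From Stdlib Require Import ClassicalEpsilon.
From mathcomp Require Import zify.
Import GRing.Theory.
Local Open Scope ring_scope.

Set Implicit Arguments. Unset Strict Implicit.
Section Aux.
Variable F : fieldType.

Lemma size_hpol (q a : F) k : (size (hpol q k a) <= k.+1)%N.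
Proof.
elim: k => [|k IH]; first by rewrite /hpol big_ord0 size_poly1.
rewrite /hpol big_ord_recr /=.
apply: leq_trans (size_mul_leq _ _) _.
have H2 : (size (((1 + a ^+ 2 * q ^+ (2 * k))%:P - (a * q ^+ k) *: 'X)%R) <= 2)%N.
  apply: leq_trans (size_add _ _) _; rewrite geq_max; apply/andP; split.
    by apply: leq_trans (size_polyC_leq1 _) _.
  by rewrite size_opp; apply: leq_trans (size_scale_leq _ _) _; rewrite size_polyX.
rewrite -/(hpol q k a).
lia.
Qed.

Lemma hpolD (q a : F) m n :
  hpol q (m + n) a = hpol q m a * hpol q n (a * q ^+ m).
Proof.
rewrite /hpol big_split_ord /=; congr (_ * _).
apply: eq_bigr => i _ /=.
rewrite exprMn -exprM -mulrA -exprD.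
have -> : (2 * (m + i) = m * 2 + 2 * i)%N by lia.
by rewrite exprD mulrA.
Qed.

Lemma size_E (q c d : F) N l : (l <= N)%N ->
  (size (hpol q l c * hpol q (N - l) d)%R <= N.+1)%N.
Proof.
move=> lN; apply: leq_trans (size_mul_leq _ _) _.
have := size_hpol q c l; have := size_hpol q d (N - l); lia.
Qed.

Lemma span (q c d : F) N (p : {poly F}) : hfree q c d N -> (size p <= N.+1)%N ->
  exists r : nat -> F, p = \sum_(l < N.+1) r l *: (hpol q l c * hpol q (N - l) d).
Proof.
move=> hf sp.
set E := fun l : nat => hpol q l c * hpol q (N - l) d.
pose A : 'M[F]_(N.+1) := \matrix_(i < N.+1) (poly_rV (E i) : 'rV_(N.+1)).
have key : forall v : 'rV_(N.+1), rVpoly (v *m A) = \sum_(i < N.+1) v 0 i *: E i.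
  move=> v; rewrite mulmx_sum_row linear_sum; apply: eq_bigr => i _.
  by rewrite linearZ /= rowK poly_rV_K // size_E // -ltnS.
have uA : A \in unitmx.
  rewrite unitmxE unitfE; apply/negP => /det0P [v vn0 vA].
  move/negP: vn0; apply; apply/eqP/rowP => i; rewrite mxE.
  have := hf (fun l => v 0 (inord l)); rewrite -/E.
  move=> /(_ _ i (ltn_ord i)); rewrite inord_val; apply.
  have h := key v; rewrite vA linear0 in h; rewrite [RHS]h.
  by apply: eq_bigr => j _; rewrite inord_val.
exists (fun l => (poly_rV p *m invmx A) 0 (inord l)).
rewrite -{1}(poly_rV_K sp) -{1}(mulmxKV uA (poly_rV p)) key.
by apply: eq_bigr => j _; rewrite inord_val.
Qed.


Lemma Rexp_eps (q a b c d : F) N k : hfree q c d N -> (k <= N)%N ->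
  Rexp q a b c d N k (Rcoef q a b c d N k).
Proof.
move=> hf kN; apply: (@epsilon_spec _ _ (Rexp q a b c d N k)).
by apply: span => //; apply: size_E.
Qed.

Lemma Runiq (q a b c d : F) N k r1 r2 l : hfree q c d N ->
  Rexp q a b c d N k r1 -> Rexp q a b c d N k r2 -> (l <= N)%N -> r1 l = r2 l.
Proof.
move=> hf h1 h2 lN; apply/eqP; rewrite -subr_eq0; apply/eqP.
apply: (hf (fun i => r1 i - r2 i) _ l lN).
under eq_bigr => i _ do rewrite scalerBl.
by rewrite sumrB -h1 -h2 subrr.
Qed.

Lemma fa (q : F) (al : bool) a k j :
  hpol q (k + j) a = hpol q k (a * q ^+ (al * j)) * hpol q j (a * q ^+ ((~~ al) * k)).
Proof.
case: al => /=; rewrite ?mul1n ?mul0n expr0 mulr1 //.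
by rewrite addnC hpolD mulrC.
by rewrite hpolD.
Qed.

End Aux.

Theorem mainTheorem8 (F : fieldType) (q a b c d : F) (M N : nat) :
  hfree q c d M ->
  (forall m, (m <= M)%N -> hfree q (c * q ^+ m) (d * q ^+ (M - m)) N) ->
  hfree q c d (M + N) ->
  forall (al be : bool) (k j l : nat),
    (k <= M)%N -> (j <= N)%N -> (l <= M + N)%N ->
    Rcoef q a b c d (M + N) (k + j) l
    = \sum_(m < M.+1) \sum_(n < N.+1 | (m + n == l)%N)
        Rcoef q (a * q ^+ (al * j)) (b * q ^+ (be * (N - j))) c d M k m
        * Rcoef q (a * q ^+ ((~~ al) * k)) (b * q ^+ ((~~ be) * (M - k)))
                (c * q ^+ m) (d * q ^+ (M - m)) N j n.
Proof.
move=> hM hN hMN al be k j l kM jN lMN.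
set r1 := Rcoef q (a * q ^+ (al * j)) (b * q ^+ (be * (N - j))) c d M k.
set r2 := fun m => Rcoef q (a * q ^+ ((~~ al) * k)) (b * q ^+ ((~~ be) * (M - k)))
                (c * q ^+ m) (d * q ^+ (M - m)) N j.
pose s l := \sum_(m < M.+1) \sum_(n < N.+1 | (m + n == l)%N) r1 m * r2 m n.
have -> : \sum_(m < M.+1) \sum_(n < N.+1 | (m + n == l)%N) r1 m * r2 m n = s l by [].
apply: (@Runiq F q a b c d (M + N) (k + j) _ s l hMN _ _ lMN); first by apply: Rexp_eps => //; lia.
rewrite /Rexp.
have -> : (M + N - (k + j) = (M - k) + (N - j))%N by lia.
rewrite (fa q al a k j) (fa q be b (M - k) (N - j)).
have e1 := Rexp_eps (a * q ^+ (al * j)) (b * q ^+ (be * (N - j))) hM kM.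
rewrite /Rexp in e1; rewrite mulrACA e1 mulr_suml.
have eE : forall (m : 'I_M.+1) (n : 'I_N.+1),
  hpol q m c * hpol q (M - m) d * (hpol q n (c * q ^+ m) * hpol q (N - n) (d * q ^+ (M - m)))
  = hpol q (m + n) c * hpol q (M + N - (m + n)) d.
  move=> m n; have -> : (M + N - (m + n) = (M - m) + (N - n))%N.
    have := ltn_ord m; have := ltn_ord n; lia.
  by rewrite !hpolD mulrACA.
transitivity (\sum_(m < M.+1) \sum_(n < N.+1) (r1 m * r2 m n) *:
   (hpol q (m + n) c * hpol q (M + N - (m + n)) d)).
  apply: eq_bigr => m _.
  have e2 := Rexp_eps (a * q ^+ (~~ al * k)) (b * q ^+ (~~ be * (M - k)))
    (hN m (ltn_ord m : (m < M.+1)%N)) jN.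
  rewrite /Rexp in e2; rewrite -scalerAl e2 mulr_sumr scaler_sumr.
  apply: eq_bigr => n _; rewrite -scalerAr scalerA -eE //.
rewrite /s; under [RHS]eq_bigr => l' _ do rewrite scaler_suml.
rewrite [RHS]exchange_big /=; apply: eq_bigr => m _.
under [RHS]eq_bigr => l' _ do rewrite scaler_suml big_mkcond.
rewrite [RHS]exchange_big /=; apply: eq_bigr => n _.
rewrite -big_mkcond /=.
rewrite (eq_bigl (fun l' : 'I_(M + N).+1 => l' == inord (m + n))); last first.
  move=> l'; rewrite -val_eqE /= inordK; first by rewrite eq_sym.
  have := ltn_ord m; have := ltn_ord n; lia.
rewrite big_pred1_eq inordK //.
have := ltn_ord m; have := ltn_ord n; lia.
Qed.
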